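(* Let $\Lambda$ be a finite set of sites and $N\ge1$. For each unordered pair $\langle xy\rangle$ of distinct sites let $\mathcal{V}_{xy}:[-1,1]\to\mathbb{R}$ be a function, and let $H(\{\sigma\})=-\sum_{\langle xy\rangle}\mathcal{V}_{xy}(\sigma_x\cdot\sigma_y)$ for $\sigma=(\sigma_x)_{x\in\Lambda}$, $\sigma_x\in S^{N-1}\subset\mathbb{R}^N$. Let $\mu$ be a nonnegative measure on $(S^{N-1})^\Lambda$ that is invariant under all transformations $\sigma_x\mapsto\eta_x\sigma_x$ with $\eta_x=\pm1$, and let $\langle\cdot\rangle_{H,\mu}$ denote expectation with respect to the probability measure $Z^{-1}e^{-H(\{\sigma\})}d\mu(\{\sigma\})$ (assumed normalizable). Set $\mathcal{V}^-_{xy}(s)=\tfrac12(\mathcal{V}_{xy}(s)-\mathcal{V}_{xy}(-s))$ and $J_{xy}=\sup_{s\in[-1,1]}|\mathcal{V}^-_{xy}(s)|$. Then for any sites $x_1,y_1,\dots,x_n,y_n\in\Lambda$, $$\big|\langle(\sigma_{x_1}\cdot\sigma_{y_1})\cdots(\sigma_{x_n}\cdot\sigma_{y_n})\rangle_{H,\mu}\big|\le \langle\varepsilon_{x_1}\varepsilon_{y_1}\cdots\varepsilon_{x_n}\varepsilon_{y_n}\rangle_{\mathrm{Ising},J}\,\langle|\sigma_{x_1}\cdot\sigma_{y_1}|\cdots|\sigma_{x_n}\cdot\sigma_{y_n}|\rangle_{H,\mu}$$ $$\le \langle\varepsilon_{x_1}\varepsilon_{y_1}\cdots\varepsilon_{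x_n}\varepsilon_{y_n}\rangle_{\mathrm{Ising},J}\,\langle(\sigma_{x_1}\cdot\sigma_{y_1})^2\cdots(\sigma_{x_n}\cdot\sigma_{y_n})^2\rangle_{H,\mu}^{1/2}\le\langle\varepsilon_{x_1}\varepsilon_{y_1}\cdots\varepsilon_{x_n}\varepsilon_{y_n}\rangle_{\mathrm{Ising},J}.$$
   Context: $\langle\cdot\rangle_{\mathrm{Ising},J}$ denotes expectation in the Ising model on $\Lambda$ with spins $\varepsilon_x\in\{\pm1\}$ and pair couplings $J_{xy}$: $\langle F\rangle_{\mathrm{Ising},J}=\sum_{\varepsilon}F(\varepsilon)e^{\sum_{\langle xy\rangle}J_{xy}\varepsilon_x\varepsilon_y}\big/\sum_{\varepsilon}e^{\sum_{\langle xy\rangle}J_{xy}\varepsilon_x\varepsilon_y}$, the sums running over $\varepsilon\in\{\pm1\}^\Lambda$. *)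

(* Defs.v *)
From HB Require Import structures.
From mathcomp Require Import all_boot all_order all_algebra.
From mathcomp Require Import all_classical all_reals all_analysis.
Set Implicit Arguments. Unset Strict Implicit. Unset Printing Implicit Defensive.
Import Order.TTheory GRing.Theory Num.Theory.
Local Open Scope classical_set_scope.
Local Open Scope ring_scope.

Section Defs.
Variable R : realType.

(* Sites are Lambda = 'I_L; a spin is a vector of R^N, represented as an
   N.-tuple R; a configuration is an L.-tuple of spins (product sigma-algebra). *)
Definition spin (N : nat) := N.-tuple R.
Definition config (L N : nat) := L.-tuple (spin N).

Definition dotv (N : nat) (a b : spin N) : R := \sum_(i < N) tnth a i * tnth b i.

Definition site (L N : nat) (c : config L N) (x : 'I_L) : spin N := tnth c x.

Definition sphere_configs (L N : nat) : set (config L N) :=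
  [set c | forall x : 'I_L, dotv (site c x) (site c x) = 1].

Arguments sphere_configs : clear implicits.

(* the transformation sigma_x |-> eta_x sigma_x, eta_x = -1 iff eta x = true *)
Definition flip (L N : nat) (eta : {ffun 'I_L -> bool}) (c : config L N)
  : config L N :=
  [tuple (if eta x then [tuple - tnth (site c x) j | j < N] else site c x)
  | x < L].

Definition hamiltonian (L N : nat) (V : 'I_L -> 'I_L -> R -> R)
  (c : config L N) : R :=
  - \sum_(x < L) \sum_(y < L | (x < y)%N) V x y (dotv (site c x) (site c y)).

Definition boltz (L N : nat) (V : 'I_L -> 'I_L -> R -> R) (c : config L N) : R :=
  expR (- hamiltonian V c).

Definition partition_fun (L N : nat) (V : 'I_L -> 'I_L -> R -> R)
  (mu : {measure set (config L N) -> \bar R}) : \bar R :=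
  (\int[mu]_(c in sphere_configs L N) (boltz V c)%:E)%E.

Definition gibbs_avg (L N : nat) (V : 'I_L -> 'I_L -> R -> R)
  (mu : {measure set (config L N) -> \bar R}) (F : config L N -> R) : R :=
  fine (\int[mu]_(c in sphere_configs L N) (F c * boltz V c)%:E)%E
  / fine (partition_fun V mu).

Definition odd_part (f : R -> R) (s : R) : R := (f s - f (- s)) / 2.

Definition Jcoupling (L : nat) (V : 'I_L -> 'I_L -> R -> R) (x y : 'I_L) : R :=
  sup [set `|odd_part (V x y) s| | s in `[-1, 1]%classic].

Definition ising_spin (b : bool) : R := if b then -1 else 1.

Definition ising_weight (L : nat) (J : 'I_L -> 'I_L -> R)
  (e : {ffun 'I_L -> bool}) : R :=
  expR (\sum_(x < L) \sum_(y < L | (x < y)%N)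
          J x y * ising_spin (e x) * ising_spin (e y)).

Definition ising_avg (L : nat) (J : 'I_L -> 'I_L -> R)
  (F : {ffun 'I_L -> bool} -> R) : R :=
  (\sum_(e : {ffun 'I_L -> bool}) F e * ising_weight J e)
  / (\sum_(e : {ffun 'I_L -> bool}) ising_weight J e).

End Defs.
Arguments sphere_configs {R} L N.
Arguments ising_spin {R}.

(* Main.v *)
Require Import Defs.
From HB Require Import structures.
From mathcomp Require Import all_boot all_order all_algebra.
From mathcomp Require Import all_classical all_reals all_analysis.
From mathcomp Require Import ring lra measurable_realfun.
Set Implicit Arguments. Unset Strict Implicit. Unset Printing Implicit Defensive.
Import Order.TTheory GRing.Theory Num.Theory.
Local Open Scope classical_set_scope.
Local Open Scope ring_scope.

Section Ising.
Variable R : realType.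
Variable L : nat.
Local Notation cfg := {ffun 'I_L -> bool}.
Local Notation eps := (@ising_spin R).

Lemma eps_sq b : eps b * eps b = 1.
Proof. by case: b; rewrite /ising_spin ?mulrNN mulr1. Qed.

Lemma eps_xor a b : eps (a (+) b) = eps a * eps b.
Proof. by case: a; case: b; rewrite /ising_spin /= ?mulrNN ?mulr1 ?mul1r ?mulN1r ?mulrN1. Qed.

Lemma abs_eps b : `|eps b| = 1.
Proof. by case: b; rewrite /ising_spin ?normrN normr1. Qed.

Definition mono (m s : cfg) : R := \prod_x (if m x then eps (s x) else 1).

Lemma mono_mul m m' s : mono m s * mono m' s = mono [ffun x => m x (+) m' x] s.
Proof.
rewrite /mono -big_split /=; apply: eq_bigr => x _; rewrite ffunE.
by case: (m x); case: (m' x); rewrite /= ?mulr1 ?mul1r ?eps_sq.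
Qed.

Definition delta (x : 'I_L) : cfg := [ffun z => z == x].

Lemma mono_delta x s : mono (delta x) s = eps (s x).
Proof.
rewrite /mono (bigD1 x) //= ffunE eqxx big1 ?mulr1 // => z /negbTE zx.
by rewrite ffunE zx.
Qed.

Lemma mono_sum_ge0 m : 0 <= \sum_s mono m s.
Proof.
rewrite /mono -(bigA_distr_bigA (fun x b => if m x then eps b else 1)) /=.
apply: prodr_ge0 => x _; rewrite big_bool /=.
by case: (m x); rewrite /ising_spin ?addNr // addr_ge0.
Qed.

Definition Pc (f : cfg -> R) := forall m, 0 <= \sum_s mono m s * f s.
Definition Mc (g : cfg -> R) := forall f, Pc f -> Pc (fun s => g s * f s).

Lemma Pc_ext f g : f =1 g -> Pc f -> Pc g.
Proof. by move=> fg Pf m; under eq_bigr do rewrite -fg; exact: Pf. Qed.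

Lemma Mc_ext f g : f =1 g -> Mc f -> Mc g.
Proof. by move=> fg Mf h Ph; apply: (Pc_ext _ (Mf h Ph)) => s; rewrite fg. Qed.

Lemma Pc1 : Pc (fun _ => 1).
Proof. by move=> m; under eq_bigr do rewrite mulr1; exact: mono_sum_ge0. Qed.

Lemma Pc_comb a b f g : 0 <= a -> 0 <= b -> Pc f -> Pc g ->
  Pc (fun s => a * f s + b * g s).
Proof.
move=> a0 b0 Pf Pg m.
rewrite (eq_bigr (fun s => a * (mono m s * f s) + b * (mono m s * g s))); last first.
  by move=> s _; ring.
by rewrite big_split /= -!mulr_sumr; apply: addr_ge0; apply: mulr_ge0.
Qed.

Lemma Mc_cst a : 0 <= a -> Mc (fun _ => a).
Proof.
move=> a0 f Pf m.
rewrite (eq_bigr (fun s => a * (mono m s * f s))); last by move=> s _; rewrite mulrCA.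
by rewrite -mulr_sumr mulr_ge0.
Qed.

Lemma Mc_eps x : Mc (fun s => eps (s x)).
Proof.
move=> f Pf m.
rewrite (eq_bigr (fun s => mono [ffun z => m z (+) delta x z] s * f s)).
  exact: Pf.
by move=> s _; rewrite -mono_mul mono_delta mulrA.
Qed.

Lemma Mc_mul g h : Mc g -> Mc h -> Mc (fun s => g s * h s).
Proof. by move=> Mg Mh f Pf; apply: (Pc_ext _ (Mg _ (Mh _ Pf))) => s /=; rewrite mulrA. Qed.

Lemma Mc_add g h : Mc g -> Mc h -> Mc (fun s => g s + h s).
Proof.
move=> Mg Mh f Pf; apply: (Pc_ext _ (Pc_comb ler01 ler01 (Mg _ Pf) (Mh _ Pf))) => s /=.
by rewrite !mul1r mulrDl.
Qed.

Lemma Mc_prod (I : Type) (r : seq I) (P : pred I) (F : I -> cfg -> R) :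
  (forall i, P i -> Mc (F i)) -> Mc (fun s => \prod_(i <- r | P i) F i s).
Proof.
move=> MF; elim: r => [|i r IH].
  by apply: (Mc_ext _ (Mc_cst ler01)) => s; rewrite big_nil.
case Pi: (P i).
  by apply: (Mc_ext _ (Mc_mul (MF i Pi) IH)) => s; rewrite big_cons Pi.
by apply: (Mc_ext _ IH) => s; rewrite big_cons Pi.
Qed.

Lemma Mc_exp (c : R) x y : 0 <= c ->
  Mc (fun s => expR (c * eps (s x) * eps (s y))).
Proof.
move=> c0.
have a0 : 0 <= (expR c + expR (- c)) / 2.
  by rewrite divr_ge0 // addr_ge0 // ltW // expR_gt0.
have b0 : 0 <= (expR c - expR (- c)) / 2.
  by rewrite divr_ge0 // subr_ge0 ler_expR; lra.
apply: (Mc_ext _ (Mc_add (Mc_cst a0)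
   (Mc_mul (Mc_cst b0) (Mc_mul (Mc_eps x) (Mc_eps y))))) => s /=.
rewrite -mulrA.
by case: (s x); case: (s y); rewrite /ising_spin ?mulrNN ?mulr1 ?mulrN1 ?mulN1r ?opprK; rewrite ?mulrN; lra.
Qed.

Definition Obs n (xs ys : 'I_n -> 'I_L) (s : cfg) : R :=
  \prod_(i < n) (eps (s (xs i)) * eps (s (ys i))).

Lemma gks1 n (xs ys : 'I_n -> 'I_L) (C : 'I_L -> 'I_L -> R) :
  (forall x y : 'I_L, (x < y)%N -> 0 <= C x y) ->
  0 <= \sum_s Obs xs ys s * ising_weight C s.
Proof.
move=> C0.
have M : Mc (fun s => Obs xs ys s * ising_weight C s).
  apply: Mc_mul.
    apply: (Mc_ext _ (@Mc_prod _ (index_enum 'I_n) xpredT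
      (fun i s => eps (s (xs i)) * eps (s (ys i))) _)) => //.
    by move=> i _; exact: Mc_mul (Mc_eps _) (Mc_eps _).
  apply: (Mc_ext (f := fun s => \prod_(x < L) \prod_(y < L | (x < y)%N)
            expR (C x y * eps (s x) * eps (s y)))).
    move=> s; rewrite /ising_weight expR_sum; apply: eq_bigr => x _.
    by rewrite expR_sum.
  apply: (@Mc_prod _ (index_enum 'I_L) xpredT
    (fun x s => \prod_(y < L | (x < y)%N) expR (C x y * eps (s x) * eps (s y)))).
  move=> x _.
  apply: (@Mc_prod _ (index_enum 'I_L) (fun y => (x < y)%N)
    (fun y s => expR (C x y * eps (s x) * eps (s y)))).
  by move=> y xy; exact: Mc_exp (C0 _ _ xy).
have := M _ Pc1 [ffun => false].
rewrite (eq_bigr (fun s => Obs xs ys s * ising_weight C s)) // => s _.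
by rewrite /mono big1 ?mul1r ?mulr1 // => x _; rewrite ffunE.
Qed.

Definition Nsum (K : 'I_L -> 'I_L -> R) (O : cfg -> R) :=
  \sum_s O s * ising_weight K s.
Definition Zsum (K : 'I_L -> 'I_L -> R) := \sum_(s : cfg) ising_weight K s.

Lemma Zsum_gt0 K : 0 < Zsum K.
Proof.
rewrite /Zsum (bigD1 [ffun => false]) //= ltr_pwDl ?expR_gt0 //.
by apply: sumr_ge0 => s _; rewrite ltW // expR_gt0.
Qed.

Lemma Obs_xor n (xs ys : 'I_n -> 'I_L) (s t : cfg) :
  Obs xs ys [ffun x => s x (+) t x] = Obs xs ys s * Obs xs ys t.
Proof.
rewrite /Obs -big_split /=; apply: eq_bigr => i _.
by rewrite !ffunE !eps_xor mulrACA.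
Qed.

Lemma Obs_abs n (xs ys : 'I_n -> 'I_L) (s : cfg) : `|Obs xs ys s| = 1.
Proof.
rewrite /Obs normr_prod big1 // => i _.
by rewrite normrM !abs_eps mulr1.
Qed.

Lemma weight_xor (J K : 'I_L -> 'I_L -> R) (s t : cfg) :
  ising_weight J s * ising_weight K [ffun x => s x (+) t x] =
  ising_weight (fun x y => J x y + K x y * eps (t x) * eps (t y)) s.
Proof.
rewrite /ising_weight -expRD -big_split /=; congr expR.
apply: eq_bigr => x _; rewrite -big_split /=; apply: eq_bigr => y _.
rewrite !ffunE !eps_xor; ring.
Qed.

Lemma xor_inj (s : cfg) : injective (fun t : cfg => [ffun x => s x (+) t x]).
Proof.
move=> t1 t2 /ffunP h; apply/ffunP => x; have := h x; rewrite !ffunE.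
by case: (s x); case: (t1 x); case: (t2 x).
Qed.

Lemma ginibre_sign n (xs ys : 'I_n -> 'I_L) (J K : 'I_L -> 'I_L -> R) (e : R) :
  (forall x y : 'I_L, (x < y)%N -> `|K x y| <= J x y) -> (e = 1 \/ e = -1) ->
  0 <= Nsum J (Obs xs ys) * Zsum K + e * (Zsum J * Nsum K (Obs xs ys)).
Proof.
move=> JK he.
set O := Obs xs ys.
have E : Nsum J O * Zsum K + e * (Zsum J * Nsum K O) =
  \sum_s \sum_t (1 + e * O t) * (O s *
     ising_weight (fun x y => J x y + K x y * eps (t x) * eps (t y)) s).
  have -> : Nsum J O * Zsum K = \sum_s \sum_t (O s * ising_weight J s) * ising_weight K t.
    by rewrite /Nsum /Zsum mulr_suml; apply: eq_bigr => s _; rewrite mulr_sumr.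
  have -> : Zsum J * Nsum K O = \sum_s \sum_t ising_weight J s * (O t * ising_weight K t).
    by rewrite /Nsum /Zsum mulr_suml; apply: eq_bigr => s _; rewrite mulr_sumr.
  rewrite mulr_sumr -big_split /=.
  apply: eq_bigr => s _.
  rewrite mulr_sumr -big_split /=.
  rewrite (reindex_inj (@xor_inj s)) /=.
  apply: eq_bigr => t _.
  rewrite -weight_xor /O Obs_xor.
  ring.
rewrite E exchange_big /=; apply: sumr_ge0 => t _.
rewrite -mulr_sumr; apply: mulr_ge0.
  have := Obs_abs xs ys t; rewrite -/O => h.
  have : `|O t| <= 1 by rewrite h.
  by rewrite ler_norml => /andP[h1 h2]; case: he => ->; lra.
apply: gks1 => x y xy.
have h : `|K x y * eps (t x) * eps (t y)| = `|K x y| by rewrite !normrM !abs_eps !mulr1.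
have : `|K x y * eps (t x) * eps (t y)| <= `|K x y| by rewrite h.
rewrite ler_norml => /andP[h1 _]; have := JK _ _ xy; lra.
Qed.

Lemma ginibre n (xs ys : 'I_n -> 'I_L) (J K : 'I_L -> 'I_L -> R) :
  (forall x y : 'I_L, (x < y)%N -> `|K x y| <= J x y) ->
  `|Nsum K (Obs xs ys) / Zsum K| <= Nsum J (Obs xs ys) / Zsum J.
Proof.
move=> JK.
have h1 := @ginibre_sign n xs ys J K 1 JK (or_introl erefl).
have h2 := @ginibre_sign n xs ys J K (-1) JK (or_intror erefl).
have zj := Zsum_gt0 J; have zk := Zsum_gt0 K.
rewrite normrM normfV (gtr0_norm zk) ler_pdivrMr // mulrAC ler_pdivlMr //.
rewrite -[X in _ * X](gtr0_norm zj) -normrM ler_norml; apply/andP; split; nra.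
Qed.

Lemma ising_nonneg n (xs ys : 'I_n -> 'I_L) (J : 'I_L -> 'I_L -> R) :
  (forall x y : 'I_L, (x < y)%N -> 0 <= J x y) -> 0 <= Nsum J (Obs xs ys) / Zsum J.
Proof.
by move=> J0; rewrite divr_ge0 ?gks1 // ltW // Zsum_gt0.
Qed.

End Ising.
Arguments Obs {R L n} xs ys s.

Section Meas.
Variable R : realType.
Variables L N : nat.
Local Notation cf := (config R L N).
Local Notation S := (@sphere_configs R L N).

Lemma msum (D : set cf) (I : Type) (s : seq I) (P : pred I) (h : I -> cf -> R) :
  (forall i, P i -> measurable_fun D (h i)) ->
  measurable_fun D (fun c => \sum_(i <- s | P i) h i c).
Proof.
move=> mh; elim: s => [|i s IH].
  by under eq_fun do rewrite big_nil; exact: measurable_cst.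
have -> : (fun c => \sum_(j <- i :: s | P j) h j c) =
          (fun c => (if P i then h i c else 0) + \sum_(j <- s | P j) h j c).
  by apply: funext => c; rewrite big_cons; case: (P i); rewrite ?add0r.
apply: measurable_funD => //.
by case Pi: (P i); [exact: mh|exact: measurable_cst].
Qed.

Lemma mprod (D : set cf) (I : Type) (s : seq I) (h : I -> cf -> R) :
  (forall i, measurable_fun D (h i)) ->
  measurable_fun D (fun c => \prod_(i <- s) h i c).
Proof.
move=> mh; elim: s => [|i s IH].
  by under eq_fun do rewrite big_nil; exact: measurable_cst.
under eq_fun do rewrite big_cons.
exact: measurable_funM.
Qed.

Lemma mcoord (x : 'I_L) (j : 'I_N) : measurable_fun [set: cf] (fun c => tnth (site c x) j).
Proof.
rewrite /site.
apply: (measurableT_comp (f := fun v : spin R N => tnth v j) (g := fun c : cf => tnth c x)).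
  exact: measurable_tnth.
exact: measurable_tnth.
Qed.

Lemma mdot (x y : 'I_L) : measurable_fun [set: cf] (fun c => dotv (site c x) (site c y)).
Proof.
rewrite /dotv; apply: msum => j _.
by apply: measurable_funM; apply: mcoord.
Qed.

Lemma mS : measurable S.
Proof.
have -> : S = \bigcap_(x in [set: 'I_L]) ((fun c => dotv (site c x) (site c x)) @^-1` [set 1]).
  by apply/seteqP; split => [c h x _|c h x]; [exact: h|exact: (h x I)].
apply: fin_bigcap_measurable; first exact: finite_finset.
move=> x _; rewrite -[X in measurable X]setTI.
by apply: mdot => //; exact: measurable_set1.
Qed.

Lemma dot_bound (c : cf) x y : S c -> `|dotv (site c x) (site c y)| <= 1.
Proof.
move=> Sc.
have hx := Sc x; have hy := Sc y.
rewrite /dotv in hx hy *.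
apply: (le_trans (ler_norm_sum _ _ _)).
have : \sum_(i < N) `|tnth (site c x) i * tnth (site c y) i| <=
       \sum_(i < N) ((tnth (site c x) i * tnth (site c x) i +
                      tnth (site c y) i * tnth (site c y) i) / 2).
  apply: ler_sum => i _; rewrite normrM.
  set a := tnth (site c x) i; set b := tnth (site c y) i.
  have ea : a * a = `|a| * `|a| by rewrite -normrM ger0_norm // -expr2 sqr_ge0.
  have eb : b * b = `|b| * `|b| by rewrite -normrM ger0_norm // -expr2 sqr_ge0.
  rewrite ea eb; have := sqr_ge0 (`|a| - `|b|); nra.
rewrite -mulr_suml big_split /= hx hy => h; apply: (le_trans h); lra.
Qed.


Local Notation eps := (@ising_spin R).

Lemma site_flip (eta : {ffun 'I_L -> bool}) (c : cf) x :
  site (flip eta c) x = if eta x then [tuple - tnth (site c x) j | j < N] else site c x.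
Proof. by rewrite /site /flip tnth_mktuple. Qed.

Lemma dot_flip (eta : {ffun 'I_L -> bool}) (c : cf) x y :
  dotv (site (flip eta c) x) (site (flip eta c) y) =
  eps (eta x) * eps (eta y) * dotv (site c x) (site c y).
Proof.
rewrite !site_flip /dotv /ising_spin.
case: (eta x); case: (eta y).
- rewrite mulrNN mulr1 mul1r; apply: eq_bigr => i _; by rewrite !tnth_mktuple mulrNN.
- rewrite mulr1 mulN1r -sumrN; apply: eq_bigr => i _; by rewrite !tnth_mktuple mulNr.
- rewrite mul1r mulN1r -sumrN; apply: eq_bigr => i _; by rewrite !tnth_mktuple mulrN.
- by rewrite mulr1 mul1r.
Qed.

Lemma flipK (eta : {ffun 'I_L -> bool}) (c : cf) : flip eta (flip eta c) = c.
Proof.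
apply: eq_from_tnth => x.
change (site (flip eta (flip eta c)) x = site c x).
rewrite !site_flip; case: (eta x) => //.
by apply: eq_from_tnth => j; rewrite !tnth_mktuple opprK.
Qed.

Lemma preimS (eta : {ffun 'I_L -> bool}) : flip eta @^-1` S = S.
Proof.
apply/seteqP; split => c /= h x.
  by have := h x; rewrite dot_flip eps_sq mul1r.
by rewrite dot_flip eps_sq mul1r; exact: h.
Qed.

Lemma mflip (eta : {ffun 'I_L -> bool}) : measurable_fun [set: cf] (flip eta).
Proof.
apply/measurable_fun_tnthP => x.
apply: (@eq_measurable_fun _ _ _ _ _ (fun c : cf =>
   if eta x then [tuple - tnth (site c x) j | j < N] else site c x)).
  by move=> c _ /=; rewrite -site_flip.
case: (eta x); last exact: measurable_tnth.
apply/measurable_fun_tnthP => j.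
apply: (@eq_measurable_fun _ _ _ _ _ (fun c : cf => - tnth (site c x) j)).
  by move=> c _ /=; rewrite tnth_mktuple.
by apply: measurable_funN; exact: mcoord.
Qed.

Section Boltz.
Variable V : 'I_L -> 'I_L -> R -> R.
Hypothesis hVmeas : forall x y, measurable_fun (`[-1, 1]%classic : set R) (V x y).

Lemma mVdot x y : measurable_fun S (fun c => V x y (dotv (site c x) (site c y))).
Proof.
apply: (measurable_comp (F := (`[-1, 1]%classic : set R)) (f := V x y) (g := fun c : cf => dotv (site c x) (site c y))).
- exact: measurable_itv.
- move=> _ [c Sc <-]; have := dot_bound x y Sc.
  by rewrite /= in_itv /= ler_norml.
- exact: hVmeas.
- exact: measurable_funTS (mdot x y).
Qed.

Lemma mboltz : measurable_fun S (boltz V).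
Proof.
rewrite /boltz /hamiltonian; under eq_fun do rewrite opprK.
apply: measurableT_comp; first exact: measurable_expR.
by apply: msum => x _; apply: msum => y _; exact: mVdot.
Qed.
End Boltz.

Section Integ.
Variable mu : {measure set cf -> \bar R}.
Hypothesis hmu_inv : forall (eta : {ffun 'I_L -> bool}) (A : set cf),
      measurable A -> mu (flip eta @^-1` A) = mu A.

Definition Int (f : cf -> R) : R := fine (\int[mu]_(c in S) (f c)%:E)%E.
Definition Itg (f : cf -> R) := mu.-integrable S (EFin \o f).

Lemma Itg_Int f : Itg f -> (\int[mu]_(c in S) (f c)%:E)%E = (Int f)%:E.
Proof. by move=> h; rewrite /Int fineK //; exact: (integrable_fin_num mS h). Qed.

Lemma ItgD f g : Itg f -> Itg g -> Itg (fun c => f c + g c).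
Proof.
move=> hf hg; apply: (eq_integrable mS _ _ _ (integrableD mS hf hg)).
by move=> c _ /=; rewrite EFinD.
Qed.

Lemma ItgZ k f : Itg f -> Itg (fun c => k * f c).
Proof.
move=> hf; apply: (eq_integrable mS _ _ _ (integrableZl mS k hf)).
by move=> c _ /=; rewrite EFinM.
Qed.

Lemma Itg_sum (I : finType) (F : I -> cf -> R) : (forall i, Itg (F i)) ->
  Itg (fun c => \sum_i F i c).
Proof.
move=> hF; apply: (eq_integrable mS _ _ _
  (integrable_sum mS (index_enum I) (P := xpredT) (h := fun i c => (F i c)%:E) (fun i _ => hF i))).
by move=> c _ /=; rewrite sumEFin.
Qed.

Lemma Itg_abs f : Itg f -> Itg (fun c => `|f c|).
Proof.
move=> hf; apply: (eq_integrable mS _ _ _ (integrable_abse hf)).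
by move=> c _.
Qed.

Lemma IntD f g : Itg f -> Itg g -> Int (fun c => f c + g c) = Int f + Int g.
Proof.
move=> hf hg; rewrite {1}/Int.
have -> : (\int[mu]_(c in S) ((f c + g c)%:E))%E = (Int f + Int g)%:E.
  rewrite (eq_integral (fun c => (f c)%:E + (g c)%:E)%E); last by move=> c _; rewrite EFinD.
  by rewrite (integralD mS hf hg) (Itg_Int hf) (Itg_Int hg).
by [].
Qed.

Lemma IntZ k f : Itg f -> Int (fun c => k * f c) = k * Int f.
Proof.
move=> hf; rewrite {1}/Int.
have -> : (\int[mu]_(c in S) ((k * f c)%:E))%E = (k * Int f)%:E.
  rewrite (eq_integral (fun c => k%:E * (f c)%:E)%E); last by move=> c _; rewrite EFinM.
  by rewrite (integralZl mS hf) (Itg_Int hf).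
by [].
Qed.

Lemma Int_sum (I : finType) (F : I -> cf -> R) : (forall i, Itg (F i)) ->
  Int (fun c => \sum_i F i c) = \sum_i Int (F i).
Proof.
move=> hF; rewrite {1}/Int.
have -> : (\int[mu]_(c in S) ((\sum_i F i c)%:E))%E = (\sum_i Int (F i))%:E.
  rewrite (eq_integral (fun c => \sum_i (F i c)%:E)%E); last by move=> c _; rewrite sumEFin.
  rewrite (integral_sum mS (f := fun i c => (F i c)%:E) hF) -sumEFin.
  by apply: eq_bigr => i _; rewrite Itg_Int.
by [].
Qed.

Lemma Int_le f g : Itg f -> Itg g -> (forall c, S c -> f c <= g c) -> Int f <= Int g.
Proof.
move=> hf hg fg.
have h : (\int[mu]_(c in S) (f c)%:E <= \int[mu]_(c in S) (g c)%:E)%E.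
  apply: (le_integral mS hf hg) => c /set_mem Sc /=; rewrite lee_fin; exact: fg.
by move: h; rewrite (Itg_Int hf) (Itg_Int hg) lee_fin.
Qed.

Lemma Int_abs f : Itg f -> `|Int f| <= Int (fun c => `|f c|).
Proof.
move=> hf.
have h := le_abse_integral mu mS (measurable_int _ hf).
move: h; rewrite (Itg_Int hf) (_ : (\int[mu]_(x in S) _)%E = (Int (fun c => `|f c|))%:E).
  by rewrite /= lee_fin.
by rewrite -(Itg_Int (Itg_abs hf)); apply: eq_integral => c _.
Qed.

Section flip_inv.
Variable eta : {ffun 'I_L -> bool}.
Variable f : cf -> R.
Hypothesis hf : Itg f.

Let G := (EFin \o f) \_ S.
Let mG : measurable_fun [set: cf] G.
Proof. exact: ((measurable_restrictT _ mS).1 (measurable_int _ hf)). Qed.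
Let GS c : S c -> G c = (f c)%:E.
Proof. by move=> Sc; rewrite /G patchE mem_set. Qed.
Let Gflip c : S c -> G (flip eta c) = (f (flip eta c))%:E.
Proof. by move=> Sc; apply: GS; rewrite -(preimS eta) in Sc. Qed.
Let push_eq : forall A, measurable A -> A `<=` S -> pushforward mu (flip eta) A = mu A.
Proof. by move=> A mA _; exact: hmu_inv. Qed.

Lemma Itg_flip : Itg (fun c => f (flip eta c)).
Proof.
apply/integrableP; split.
  apply: (@eq_measurable_fun _ _ _ _ _ (G \o flip eta)).
    by move=> c /set_mem Sc /=; rewrite Gflip.
  exact: (measurableT_comp mG (measurable_funTS (mflip eta))).
have E1 : (\int[mu]_(x in S) `|(EFin \o (fun c => f (flip eta c))) x|)%E =
          (\int[mu]_(x in flip eta @^-1` S) ((abse \o G) \o flip eta) x)%E.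
  by rewrite preimS; apply: eq_integral => c /set_mem Sc /=; rewrite Gflip.
rewrite E1 -(ge0_integral_pushforward (mflip eta) mu mS).
- rewrite (eq_measure_integral mu push_eq).
  rewrite (eq_integral (fun c => `|(EFin \o f) c|)%E).
    by case/integrableP: hf.
  by move=> c /set_mem Sc /=; rewrite GS.
- exact: mflip.
- by apply: measurableT_comp => //; exact: measurable_funTS.
- by move=> y _; exact: abse_ge0.
Qed.

Lemma Int_flip : Int (fun c => f (flip eta c)) = Int f.
Proof.
rewrite /Int; congr fine.
have intG : mu.-integrable (flip eta @^-1` S) (G \o flip eta).
  rewrite preimS; apply: (eq_integrable mS _ _ _ Itg_flip).
  by move=> c /set_mem Sc /=; rewrite Gflip.
have E1 : (\int[mu]_(x in S) (f (flip eta x))%:E)%E =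
          (\int[mu]_(x in flip eta @^-1` S) (G \o flip eta) x)%E.
  by rewrite preimS; apply: eq_integral => c /set_mem Sc /=; rewrite Gflip.
rewrite E1 -(integral_pushforward (mflip eta) mG intG mS).
rewrite (eq_measure_integral mu push_eq).
  by apply: eq_integral => c /set_mem Sc /=; rewrite GS.
exact: (mflip eta).
Qed.
End flip_inv.

End Integ.

Section Main.
Variable V : 'I_L -> 'I_L -> R -> R.
Hypothesis hVmeas : forall x y, measurable_fun (`[-1, 1]%classic : set R) (V x y).
Hypothesis hVbd : forall x y, exists M : R, forall s, s \in (`[-1, 1] : interval R) ->
            `|odd_part (V x y) s| <= M.
Variable mu : {measure set cf -> \bar R}.
Hypothesis hmu_inv : forall (eta : {ffun 'I_L -> bool}) (A : set cf),
      measurable A -> mu (flip eta @^-1` A) = mu A.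
Hypothesis hZ : (0 < partition_fun V mu < +oo)%E.

Local Notation b := (boltz V).
Local Notation sdot c x y := (dotv (site c x) (site c y)).

Definition Kc (c : cf) (x y : 'I_L) : R := odd_part (V x y) (sdot c x y).
Definition Ac (c : cf) : R :=
  expR (\sum_(x < L) \sum_(y < L | (x < y)%N) ((V x y (sdot c x y) + V x y (- sdot c x y)) / 2)).

Lemma boltz_flip (eta : {ffun 'I_L -> bool}) c :
  b (flip eta c) = Ac c * ising_weight (Kc c) eta.
Proof.
rewrite /boltz /hamiltonian opprK /Ac /ising_weight -expRD -big_split /=; congr expR.
apply: eq_bigr => x _; rewrite -big_split /=; apply: eq_bigr => y _.
rewrite dot_flip /Kc /odd_part.
case: (eta x); case: (eta y); rewrite /ising_spin ?mulrNN ?mulr1 ?mul1r ?mulN1r ?mulrN1; lra.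
Qed.

Lemma J_ge_K c x y : S c -> `|Kc c x y| <= Jcoupling V x y.
Proof.
move=> Sc; rewrite /Jcoupling /Kc.
apply: ub_le_sup.
  have [M hM] := hVbd x y; exists M => _ [s hs <-]; exact: hM.
exists (sdot c x y) => //.
by have := dot_bound x y Sc; rewrite /= in_itv /= ler_norml.
Qed.

Lemma J_ge0 x y : 0 <= Jcoupling V x y.
Proof.
rewrite /Jcoupling; apply: le_trans (normr_ge0 (odd_part (V x y) 0)) _.
apply: ub_le_sup.
  have [M hM] := hVbd x y; exists M => _ [s hs <-]; exact: hM.
by exists 0 => //; rewrite /= in_itv /=; apply/andP; split; lra.
Qed.

Lemma Zpos : 0 < Int mu b.
Proof. exact: fine_gt0 hZ. Qed.

Lemma Itg_b : Itg mu b.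
Proof.
apply/integrableP; split.
  by apply/measurable_EFinP; exact: mboltz.
rewrite (eq_integral (fun c => (b c)%:E)).
  by case/andP: hZ.
by move=> c _ /=; rewrite gtr0_norm // expR_gt0.
Qed.

Lemma Itg_bdd (G : cf -> R) : measurable_fun S G -> (forall c, S c -> `|G c| <= 1) ->
  Itg mu (fun c => G c * b c).
Proof.
move=> mG hG.
apply: (le_integrable mS _ _ Itg_b).
  by apply/measurable_EFinP; apply: measurable_funM => //; exact: mboltz.
move=> c Sc /=; rewrite lee_fin normrM.
have b0 : 0 < b c by exact: expR_gt0.
rewrite (gtr0_norm b0); have := hG c Sc; have := normr_ge0 (G c); nra.
Qed.

Lemma Int_ge0 (g : cf -> R) : (forall c, S c -> 0 <= g c) -> 0 <= Int mu g.
Proof. by move=> h; apply: fine_ge0; apply: integral_ge0 => c Sc; rewrite lee_fin h. Qed.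


Lemma prod01 (I : Type) (r : seq I) (P : pred I) (f : I -> R) :
  (forall i, P i -> 0 <= f i <= 1) -> 0 <= \prod_(i <- r | P i) f i <= 1.
Proof.
move=> h; apply: (big_ind (fun x => 0 <= x <= 1)) => //.
- by rewrite ler01 lexx.
- move=> u v /andP[u0 u1] /andP[v0 v1]; apply/andP; split; first exact: mulr_ge0.
  by nra.
Qed.

Variables (n : nat) (xs ys : 'I_n -> 'I_L).
Definition Fp (c : cf) : R := \prod_(i < n) sdot c (xs i) (ys i).
Definition Fa (c : cf) : R := \prod_(i < n) `|sdot c (xs i) (ys i)|.
Definition Fs (c : cf) : R := \prod_(i < n) (sdot c (xs i) (ys i)) ^+ 2.

Lemma mFp : measurable_fun S Fp.
Proof. by apply: measurable_funTS; apply: mprod => i; exact: mdot. Qed.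
Lemma mFa : measurable_fun S Fa.
Proof.
apply: measurable_funTS; apply: mprod => i.
by apply: measurableT_comp => //; exact: mdot.
Qed.
Lemma mFs : measurable_fun S Fs.
Proof.
apply: measurable_funTS; apply: mprod => i.
by under eq_fun do rewrite expr2; apply: measurable_funM; exact: mdot.
Qed.

Lemma Fa01 c : S c -> 0 <= Fa c <= 1.
Proof.
move=> Sc; apply: prod01 => i _; rewrite normr_ge0 /=; exact: dot_bound.
Qed.
Lemma Fs01 c : S c -> 0 <= Fs c <= 1.
Proof.
move=> Sc; apply: prod01 => i _; rewrite sqr_ge0 /=.
have := dot_bound (xs i) (ys i) Sc; rewrite ler_norml => /andP[h1 h2].
rewrite expr2; nra.
Qed.
Lemma normFp c : `|Fp c| = Fa c.
Proof. by rewrite /Fp normr_prod. Qed.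
Lemma FsE c : Fs c = Fa c ^+ 2.
Proof.
rewrite /Fs /Fa -prodrXl; apply: eq_bigr => i _.
by rewrite real_normK // num_real.
Qed.

Lemma Fp_flip (eta : {ffun 'I_L -> bool}) c : Fp (flip eta c) = Obs xs ys eta * Fp c.
Proof.
by rewrite /Fp /Obs -big_split /=; apply: eq_bigr => i _; rewrite dot_flip.
Qed.
Lemma Fa_flip (eta : {ffun 'I_L -> bool}) c : Fa (flip eta c) = Fa c.
Proof.
by rewrite /Fa; apply: eq_bigr => i _; rewrite dot_flip !normrM !abs_eps !mul1r.
Qed.

Local Notation Jc := (Jcoupling V).
Local Notation Iis := (Nsum Jc (Obs xs ys) / Zsum Jc).

Lemma Iis_ge0 : 0 <= Iis.
Proof. by apply: ising_nonneg => x y _; exact: J_ge0. Qed.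

Lemma sumFp c : \sum_(eta : {ffun 'I_L -> bool}) Fp (flip eta c) * b (flip eta c) =
   Fp c * Ac c * Nsum (Kc c) (Obs xs ys).
Proof.
rewrite /Nsum mulr_sumr; apply: eq_bigr => eta _.
rewrite boltz_flip Fp_flip; ring.
Qed.
Lemma sumFa c : \sum_(eta : {ffun 'I_L -> bool}) Fa (flip eta c) * b (flip eta c) =
   Fa c * Ac c * Zsum (Kc c).
Proof.
rewrite /Zsum mulr_sumr; apply: eq_bigr => eta _.
rewrite boltz_flip Fa_flip; ring.
Qed.

Lemma pointwise c : S c ->
  `|Fp c * Ac c * Nsum (Kc c) (Obs xs ys)| <= Iis * (Fa c * Ac c * Zsum (Kc c)).
Proof.
move=> Sc.
have g := ginibre xs ys (fun x y _ => J_ge_K x y Sc).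
have zk := Zsum_gt0 (Kc c).
have hN : `|Nsum (Kc c) (Obs xs ys)| <= Iis * Zsum (Kc c).
  by move: g; rewrite normrM normfV (gtr0_norm zk) ler_pdivrMr.
have a0 : 0 < Ac c by exact: expR_gt0.
rewrite !normrM normFp (gtr0_norm a0).
rewrite [X in _ <= X](_ : _ = Fa c * Ac c * (Iis * Zsum (Kc c))); last by ring.
have /andP[f0 _] := Fa01 Sc.
by apply: ler_wpM2l => //; apply: mulr_ge0 => //; exact: ltW.
Qed.

Let hFp := Itg_bdd mFp (fun c Sc => eq_ind_r (fun x => x <= 1) (proj2 (andP (Fa01 Sc))) (normFp c)).
Let hFa : Itg mu (fun c => Fa c * b c).
Proof.
apply: Itg_bdd mFa _ => c Sc; have /andP[h0 h1] := Fa01 Sc.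
by rewrite ger0_norm.
Qed.
Let hFs : Itg mu (fun c => Fs c * b c).
Proof.
apply: Itg_bdd mFs _ => c Sc; have /andP[h0 h1] := Fs01 Sc.
by rewrite ger0_norm.
Qed.

Lemma card_pos : (0 < #|{ffun 'I_L -> bool}|)%N.
Proof. by apply/card_gt0P; exists [ffun => false]. Qed.

Lemma avg_flip (f : cf -> R) : Itg mu f ->
  Int mu (fun c => \sum_(eta : {ffun 'I_L -> bool}) f (flip eta c)) =
  Int mu f *+ #|{ffun 'I_L -> bool}|.
Proof.
move=> hf.
rewrite (Int_sum (F := fun eta c => f (flip eta c))); last first.
  by move=> eta; exact: (Itg_flip hmu_inv eta hf).
rewrite -sumr_const; apply: eq_bigr => eta _; exact: (Int_flip hmu_inv eta hf).
Qed.

Lemma ineq1 : `|Int mu (fun c => Fp c * b c)| <= Iis * Int mu (fun c => Fa c * b c).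
Proof.
rewrite -(ler_pMn2r card_pos) -normrMn -mulrnAr.
rewrite -(avg_flip hFp) -(avg_flip hFa).
have hs1 : Itg mu (fun c => \sum_(eta : {ffun 'I_L -> bool}) Fp (flip eta c) * b (flip eta c)).
  by apply: (Itg_sum (F := fun eta c => Fp (flip eta c) * b (flip eta c))) => eta;
     exact: (Itg_flip hmu_inv eta hFp).
have hs2 : Itg mu (fun c => \sum_(eta : {ffun 'I_L -> bool}) Fa (flip eta c) * b (flip eta c)).
  by apply: (Itg_sum (F := fun eta c => Fa (flip eta c) * b (flip eta c))) => eta;
     exact: (Itg_flip hmu_inv eta hFa).
apply: le_trans (Int_abs hs1) _.
rewrite -(IntZ _ hs2).
apply: Int_le; [exact: Itg_abs| exact: ItgZ|].
by move=> c Sc; rewrite sumFp sumFa; exact: pointwise.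
Qed.


Local Notation Z := (Int mu b).

Lemma avg_Fa_ge0 : 0 <= Int mu (fun c => Fa c * b c) / Z.
Proof.
apply: divr_ge0; last exact: ltW Zpos.
apply: Int_ge0 => c Sc; apply: mulr_ge0; last exact: ltW (expR_gt0 _).
by case/andP: (Fa01 Sc).
Qed.

Lemma avg_Fs_ge0 : 0 <= Int mu (fun c => Fs c * b c) / Z.
Proof.
apply: divr_ge0; last exact: ltW Zpos.
apply: Int_ge0 => c Sc; apply: mulr_ge0; last exact: ltW (expR_gt0 _).
by case/andP: (Fs01 Sc).
Qed.

Lemma cs : (Int mu (fun c => Fa c * b c) / Z) ^+ 2 <= Int mu (fun c => Fs c * b c) / Z.
Proof.
have z0 := Zpos.
have h : 0 <= Int mu (fun c => (Fa c - Int mu (fun c => Fa c * b c) / Z) ^+ 2 * b c).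
  apply: Int_ge0 => c _; apply: mulr_ge0; [exact: sqr_ge0 | exact: ltW (expR_gt0 _)].
set A := Int mu (fun c => Fa c * b c) in h *.
set Q := Int mu (fun c => Fs c * b c).
set a := A / Z in h *.
have hA : A = a * Z by rewrite /a divfK //; exact: lt0r_neq0.
have E : (fun c => (Fa c - a) ^+ 2 * b c) =
         (fun c => (Fs c * b c + (-(2 * a)) * (Fa c * b c)) + a ^+ 2 * b c).
  by apply: funext => c; rewrite FsE; ring.
rewrite E (IntD (ItgD hFs (ItgZ _ hFa)) (ItgZ _ Itg_b)) (IntD hFs (ItgZ _ hFa)) in h.
rewrite (IntZ _ hFa) (IntZ _ Itg_b) -/A -/Q hA in h.
rewrite ler_pdivlMr //; nra.
Qed.

Lemma final :
  `|Int mu (fun c => Fp c * b c) / Z| <= Iis * (Int mu (fun c => Fa c * b c) / Z)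
  /\ Iis * (Int mu (fun c => Fa c * b c) / Z) <= Iis * Num.sqrt (Int mu (fun c => Fs c * b c) / Z)
  /\ Iis * Num.sqrt (Int mu (fun c => Fs c * b c) / Z) <= Iis.
Proof.
have z0 := Zpos; have i0 := Iis_ge0.
split; [|split].
- rewrite normrM normfV (gtr0_norm z0) mulrA.
  by apply: ler_wpM2r; [rewrite invr_ge0 ltW|exact: ineq1].
- apply: ler_wpM2l => //.
  rewrite -(ger0_norm avg_Fa_ge0) -sqrtr_sqr ler_sqrt; last exact: avg_Fs_ge0.
  exact: cs.
- rewrite -[leRHS]mulr1; apply: ler_wpM2l => //.
  rewrite -sqrtr1 ler_sqrt // ler_pdivrMr // mul1r.
  apply: Int_le; [exact: hFs | exact: Itg_b |] => c Sc.
  have /andP[_ h1] := Fs01 Sc; have b0 : 0 < b c by exact: expR_gt0.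
  by rewrite -[leRHS]mul1r ler_wpM2r // ltW.
Qed.

End Main.



End Meas.


Theorem theoremC5 (R : realType) (L N : nat) (hN : (1 <= N)%N)
  (V : 'I_L -> 'I_L -> R -> R)
  (hVsym : forall x y, V x y = V y x)
  (hVmeas : forall x y, measurable_fun (`[-1, 1]%classic : set R) (V x y))
  (hVbd : forall x y, exists M : R, forall s, s \in (`[-1, 1] : interval R) ->
            `|odd_part (V x y) s| <= M)
  (mu : {measure set (config R L N) -> \bar R})
  (hmu_supp : mu (~` sphere_configs L N) = 0%E)
  (hmu_inv : forall (eta : {ffun 'I_L -> bool}) (A : set (config R L N)),
      measurable A -> mu (flip eta @^-1` A) = mu A)
  (hZ : (0 < partition_fun V mu < +oo)%E)
  (n : nat) (xs ys : 'I_n -> 'I_L) :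
  let J := Jcoupling V in
  let I := ising_avg J (fun e => \prod_(i < n)
                          (ising_spin (e (xs i)) * ising_spin (e (ys i)) : R)) in
  let avg := gibbs_avg V mu in
  `| avg (fun c => \prod_(i < n) dotv (site c (xs i)) (site c (ys i))) |
    <= I * avg (fun c => \prod_(i < n) `|dotv (site c (xs i)) (site c (ys i))|)
  /\ I * avg (fun c => \prod_(i < n) `|dotv (site c (xs i)) (site c (ys i))|)
    <= I * Num.sqrt (avg (fun c =>
                       \prod_(i < n) (dotv (site c (xs i)) (site c (ys i))) ^+ 2))
  /\ I * Num.sqrt (avg (fun c =>
                       \prod_(i < n) (dotv (site c (xs i)) (site c (ys i))) ^+ 2))
    <= I.
Proof.
move=> J I avg.
exact: (final hVmeas hVbd hmu_inv hZ xs ys).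
Qed.
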